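(* Let $\lambda=(\lambda_1,\ldots,\lambda_\ell)$ be a partition with $\ell$ positive parts, and let $n\geq\ell$. If there exists $p\in\{1,\ldots,\ell-2\}$ such that $\lambda_p\geq\lambda_{p+1}\geq\lambda_{p+2}+2$, then the poset $\mathcal B_\lambda^n$ is not a lattice.
   Context: For $N\geq 1$ and a partition $\nu$ with at most $N$ positive parts, $\mathcal B_\nu^N$ is the set of semistandard Young tableaux of shape $\nu$ (rows weakly increasing, columns strictly increasing) with entries in $\{1,\ldots,N+1\}$, partially ordered by the reflexive transitive closure of $T<F_i(T)$ for $i\in\{1,\ldots,N\}$ with $F_i(T)\neq 0$. Here $F_i$ is the type A crystal lowering operator: in the reading word of $T$ (rows read from bottom to top, each row left to right) keep only letters $i$ and $i+1$, replace each $i$ by '')'' and each $i+1$ by ''('', and match parentheses in the usual way; if there is no unmatched '')'', $F_i(T)=0$; otherwise $F_i(T)$ is obtained by changing the entry $i$ corresponding to the rightmost unmatched '')'' into $i+1$. *)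

(* Defs.v *)
From Stdlib Require Import Relations.Relation_Definitions Relations.Relation_Operators.
From mathcomp Require Import all_boot.
Set Implicit Arguments. Unset Strict Implicit. Unset Printing Implicit Defensive.

Definition is_partition (nu : seq nat) : bool :=
  sorted geq nu && all (fun a => 0 < a) nu.

(* A tableau is given by its rows, listed top to bottom (row 0 = top row). *)
Definition tableau := seq (seq nat).

Definition is_ssyt (N : nat) (nu : seq nat) (T : tableau) : bool :=
  [&& map size T == nu,
      all (sorted leq) T,
      all (all (fun a => (1 <= a <= N.+1))) T &
      [forall r : 'I_(size T), forall c : 'I_(size (nth [::] T r.+1)),
          nth 0 (nth [::] T r) c < nth 0 (nth [::] T r.+1) c]].

Definition reading_word (T : tableau) : seq nat := flatten (rev T).

(* Scan the word, letters i = ")" and i+1 = "("; k = position, c = number of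
   currently open (unmatched) "(", acc = position of the rightmost unmatched ")"
   seen so far. *)
Fixpoint rightmost_unmatched (i : nat) (w : seq nat) (k c : nat)
    (acc : option nat) : option nat :=
  match w with
  | [::] => acc
  | a :: w' =>
      if a == i.+1 then rightmost_unmatched i w' k.+1 c.+1 acc
      else if a == i then
        (if c == 0 then rightmost_unmatched i w' k.+1 0 (Some k)
         else rightmost_unmatched i w' k.+1 c.-1 acc)
      else rightmost_unmatched i w' k.+1 c acc
  end.

(* Crystal lowering operator F_i; None stands for F_i(T) = 0. *)
Definition F_op (i : nat) (T : tableau) : option tableau :=
  let w := reading_word T in
  match rightmost_unmatched i w 0 0 None with
  | None => None
  | Some k => Some (rev (reshape (map size (rev T)) (set_nth 0 w k i.+1)))
  end.

Definition crys_step (N : nat) (T T' : tableau) : Prop :=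
  exists i, 1 <= i <= N /\ F_op i T = Some T'.

Definition crys_le (N : nat) : tableau -> tableau -> Prop := clos_refl_trans tableau (crys_step N).

Definition is_lattice (T : Type) (S : T -> Prop) (le : T -> T -> Prop) : Prop :=
  forall x y, S x -> S y ->
    (exists z, [/\ S z, le x z, le y z &
                  forall w, S w -> le x w -> le y w -> le z w]) /\
    (exists z, [/\ S z, le z x, le z y &
                  forall w, S w -> le w x -> le w y -> le w z]).

Definition B_poset_is_lattice (N : nat) (nu : seq nat) : Prop :=
  is_lattice (fun T => is_ssyt N nu T) (crys_le N).

(* Main.v *)
From Stdlib Require Import Relations.Relation_Definitions Relations.Relation_Operators Relations.Operators_Properties.
Require Import Defs.
From mathcomp Require Import all_boot.
From mathcomp Require Import zify.
Set Implicit Arguments. Unset Strict Implicit. Unset Printing Implicit Defensive.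

Definition rk (T : tableau) := sumn (reading_word T).
Definition Hc (v : nat) (T : tableau) := count (fun a => v < a) (reading_word T).

Lemma rum_spec i w k0 c acc k :
  rightmost_unmatched i w k0 c acc = Some k ->
  acc = Some k \/ (k0 <= k < k0 + size w /\ nth 0 w (k - k0) = i).
Proof.
elim: w k0 c acc => [|a w IH] k0 c acc /=; first by left.
have step : forall c' acc', rightmost_unmatched i w k0.+1 c' acc' = Some k ->
   acc' = Some k \/ (k0 <= k < k0 + (size w).+1 /\ nth 0 (a :: w) (k - k0) = i).
  move=> c' acc' /IH [->|[/andP[H1 H2] H3]]; first by left.
  right; split; first by apply/andP; lia.
  have -> : k - k0 = (k - k0.+1).+1 by lia.
  by [].
case: eqP => [Ha|Ha].
  by case/step=> [->|]; [left|right].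
case: eqP => [Hb|Hb].
  case: eqP => [Hc0|Hc0].
    case/step=> [[<-]|]; last by right.
    right; split; first by apply/andP; lia.
    by rewrite subnn.
  by case/step=> [->|]; [left|right].
by case/step=> [->|]; [left|right].
Qed.

Lemma F_word i T T' : F_op i T = Some T' ->
  exists u v, reading_word T = u ++ i :: v /\ reading_word T' = u ++ i.+1 :: v.
Proof.
rewrite /F_op.
case E: rightmost_unmatched => [k|//] [<-].
have [//|[/andP[_ Hk] Hn]] := rum_spec E.
rewrite add0n in Hk; rewrite subn0 in Hn.
set w := reading_word T in Hk Hn *.
exists (take k w), (drop k.+1 w).
split.
  by rewrite -{1}(cat_take_drop k w) (drop_nth 0 Hk) Hn.
rewrite /reading_word revK reshapeKr.
  by rewrite set_nthE Hk.
rewrite size_set_nth /w /reading_word size_flatten /shape.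
move: Hk; rewrite /w /reading_word size_flatten /shape map_rev. lia.
Qed.

Lemma step_rk i T T' : F_op i T = Some T' -> rk T' = (rk T).+1.
Proof. by case/F_word=> u [v [E1 E2]]; rewrite /rk E1 E2 !sumn_cat /=; lia. Qed.

Lemma step_Hc i T T' v : F_op i T = Some T' -> Hc v T' = Hc v T + (v == i).
Proof.
case/F_word=> u [v' [E1 E2]]; rewrite /Hc E1 E2 !count_cat /=.
case: (ltngtP v i) => H; try lia.
Qed.

Lemma le_mono N a b : crys_le N a b ->
  (forall v, Hc v a <= Hc v b) /\ (a = b \/ rk a < rk b).
Proof.
elim=> {a b} [a b [i [_ E]]| a | a b c _ [H1 H2] _ [H3 H4]].
- split; first by move=> v; rewrite (step_Hc v E); lia.
  by right; rewrite (step_rk E).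
- by split; [|left].
- split; first by move=> v; apply: leq_trans (H1 v) (H3 v).
  case: H2 => [->//|H2]; right; case: H4 => [<-//|]; lia.
Qed.

Lemma le_cover N a b : crys_le N a b -> rk b = (rk a).+1 -> crys_step N a b.
Proof.
move=> H; have := clos_rt_rt1n _ _ _ _ H; case=> [|c b' Hs Hr] Hr'; first lia.
case: Hs => [i [Hi E]].
have Rc := step_rk E.
have [_ [Ecb|Rcb]] := le_mono (clos_rt1n_rt _ _ _ _ Hr).
  by subst; exists i.
lia.
Qed.

Lemma no_lattice N (S : tableau -> Prop) x y z1 z2 u1 u2 u3 q :
  S x -> S y -> S z1 -> S z2 -> x <> y -> z1 <> z2 -> 1 <= q -> q.+2 <= N ->
  F_op q x = Some u1 -> F_op q.+1 u1 = Some z2 ->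
  F_op q.+2 x = Some u2 -> F_op q.+1 u2 = Some z1 ->
  F_op q.+1 y = Some u3 -> F_op q u3 = Some z2 -> F_op q.+2 u3 = Some z1 ->
  F_op q.+1 x = None ->
  ~ is_lattice S (crys_le N).
Proof.
move=> Sx Sy Sz1 Sz2 nxy nz Hq HN E1 E2 E3 E4 E5 E6 E7 E8 Hlat.
have st : forall i T T', 1 <= i <= N -> F_op i T = Some T' -> crys_le N T T'.
  by move=> i T T' Hi E; apply: rt_step; exists i.
have L1 : crys_le N x z1.
  apply: rt_trans (st _ _ _ _ E3) (st _ _ _ _ E4); apply/andP; lia.
have L2 : crys_le N x z2.
  apply: rt_trans (st _ _ _ _ E1) (st _ _ _ _ E2); apply/andP; lia.
have L3 : crys_le N y z1.
  apply: rt_trans (st _ _ _ _ E5) (st _ _ _ _ E7); apply/andP; lia.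
have L4 : crys_le N y z2.
  apply: rt_trans (st _ _ _ _ E5) (st _ _ _ _ E6); apply/andP; lia.
have [[z [Sz Lxz Lyz Hz]] _] := Hlat x y Sx Sy.
have Lz1 := Hz z1 Sz1 L1 L3.
have Lz2 := Hz z2 Sz2 L2 L4.
have Rz1 : rk z1 = (rk x).+2 by rewrite (step_rk E4) (step_rk E3).
have Rz1' : rk z1 = (rk y).+2 by rewrite (step_rk E7) (step_rk E5).
have Hz1 : forall v, Hc v z1 = Hc v x + (v == q.+2) + (v == q.+1).
  by move=> v; rewrite (step_Hc v E4) (step_Hc v E3).
have Hz2 : forall v, Hc v z2 = Hc v x + (v == q) + (v == q.+1).
  by move=> v; rewrite (step_Hc v E2) (step_Hc v E1).
have [_ [Exz|Rxz]] := le_mono Lxz.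
  subst z; have [_ [Eyx|]] := le_mono Lyz; [by exfalso; apply: nxy|lia].
have [_ Rzz1] := le_mono Lz1.
have [_ Rzz2] := le_mono Lz2.
have Rz2 : rk z2 = (rk x).+2 by rewrite (step_rk E2) (step_rk E1).
have Rz : rk z = (rk x).+1.
  case: Rzz1 => [Ez1|]; last lia.
  subst z; case: Rzz2 => [Ez|]; [by exfalso; apply: nz|lia].
have [i [Hi Ei]] := le_cover Lxz Rz.
have [Hv1 _] := le_mono Lz1.
have [Hv2 _] := le_mono Lz2.
have := Hv1 i; have := Hv2 i; rewrite Hz1 Hz2 (step_Hc i Ei) eqxx.
case: (eqVneq i q.+1) => [Eq|Nq].
  by subst i; rewrite E8 in Ei.
case: (eqVneq i q.+2) => [Eq2|Nq2].
  subst i; rewrite !eqn_leq; lia.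
lia.
Qed.


Notation rum := rightmost_unmatched.

Lemma F_opE i T T' u v : reading_word T = u ++ i :: v ->
  reading_word T' = u ++ i.+1 :: v -> map size T' = map size T ->
  rum i (reading_word T) 0 0 None = Some (size u) -> F_op i T = Some T'.
Proof.
move=> E1 E2 Es Er; rewrite /F_op Er; congr Some.
rewrite E1 set_nthE.
have -> : size u < size (u ++ i :: v) by rewrite size_cat /=; lia.
rewrite take_size_cat // drop_cat ltnNge leqnSn /= subSnn /= drop0.
rewrite -E2 /reading_word map_rev -Es -map_rev flattenK.
exact: revK.
Qed.

Lemma F_opN i T : rum i (reading_word T) 0 0 None = None -> F_op i T = None.
Proof. by rewrite /F_op => ->. Qed.

Lemma rum_skip i u v k c acc : all (fun a => (a != i) && (a != i.+1)) u ->
  rum i (u ++ v) k c acc = rum i v (k + size u) c acc.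
Proof.
elim: u k => [|a u IH] k /=; first by rewrite addn0.
case/andP=> /andP[H1 H2] Hu; by rewrite (negbTE H1) (negbTE H2) (IH _ Hu) addSn addnS.
Qed.

Lemma rum_tail i u v k c acc : all (fun a => (a != i) && (a != i.+1)) v ->
  rum i (u ++ v) k c acc = rum i u k c acc.
Proof.
elim: u k c acc => [|a u IH] k c acc /=.
  move=> Hv; have := @rum_skip i v [::] k c acc Hv; rewrite cats0 => ->; by [].
move=> Hv; by case: ifP => _; [|case: ifP => _; [case: ifP|]]; rewrite IH.
Qed.

Lemma rum_nil i k c acc : rum i [::] k c acc = acc. Proof. by []. Qed.

Lemma rum_open i v k c acc : rum i (i.+1 :: v) k c acc = rum i v k.+1 c.+1 acc.
Proof. by rewrite /= eqxx. Qed.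

Lemma rum_close i v k c acc :
  rum i (i :: v) k c acc = rum i v k.+1 c.-1 (if c == 0 then Some k else acc).
Proof. rewrite /= eqxx (_ : (i == i.+1) = false); last lia. by case: c. Qed.

Lemma rum_other i b v k c acc : b != i -> b != i.+1 ->
  rum i (b :: v) k c acc = rum i v k.+1 c acc.
Proof. by move=> H1 H2; rewrite /= (negbTE H1) (negbTE H2). Qed.

Lemma rum_nopen i m v k c acc :
  rum i (nseq m i.+1 ++ v) k c acc = rum i v (k + m) (c + m) acc.
Proof.
elim: m k c => [|m IH] k c /=; first by rewrite !addn0.
rewrite eqxx IH; congr rum; lia.
Qed.

Lemma rum_nother i b m v k c acc : b != i -> b != i.+1 ->
  rum i (nseq m b ++ v) k c acc = rum i v (k + m) c acc.
Proof.
move=> H1 H2; elim: m k => [|m IH] k /=; first by rewrite !addn0.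
rewrite (negbTE H1) (negbTE H2) IH; congr rum; lia.
Qed.

Lemma rum_nclose i m v k c acc :
  rum i (nseq m i ++ v) k c acc =
  rum i v (k + m) (c - m) (if c < m then Some (k + m).-1 else acc).
Proof.
elim: m k c acc => [|m IH] k c acc /=.
  by rewrite !addn0 subn0.
rewrite eqxx (_ : (i == i.+1) = false); last lia.
case: (eqVneq c 0) => [->|Hc].
  rewrite IH; congr rum; try lia.
  by case: m {IH} => [|m] /=; congr Some; lia.
rewrite IH; congr rum; try lia.
have -> : (c.-1 < m) = (c < m.+1) by lia.
by case: ifP => _; [congr Some; lia|].
Qed.


Definition Pre (l : seq nat) p : tableau := [seq nseq (nth 0 l r) r.+1 | r <- iota 0 p].
Definition Suf (l : seq nat) p : tableau :=
  [seq nseq (nth 0 l r) r.+2 | r <- iota p.+3 (size l - p.+3)].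
Definition mkT l p a c d (s : seq nat) (e : nat) : tableau :=
  Pre l p ++ [:: nseq a p.+1 ++ s; nseq c p.+2 ++ e :: nseq d p.+4; nseq c p.+3] ++ Suf l p.
Definition midT p a c d (s : seq nat) e :=
  nseq c p.+3 ++ (nseq c p.+2 ++ e :: nseq d p.+4) ++ (nseq a p.+1 ++ s).

Lemma rw_mkT l p a c d s e : reading_word (mkT l p a c d s e) =
  flatten (rev (Suf l p)) ++ midT p a c d s e ++ flatten (rev (Pre l p)).
Proof.
rewrite /reading_word /mkT !rev_cat !flatten_cat /midT /= cats0 !catA //.
Qed.

Lemma Suf_big l p : all (fun a => p.+4 < a) (flatten (rev (Suf l p))).
Proof.
apply/allP=> a /flattenP [r]; rewrite mem_rev => /mapP [j]; rewrite mem_iota => Hj ->.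
by move/nseqP=> [-> _]; lia.
Qed.

Lemma Pre_small l p : all (fun a => a <= p) (flatten (rev (Pre l p))).
Proof.
apply/allP=> a /flattenP [r]; rewrite mem_rev => /mapP [j]; rewrite mem_iota => Hj ->.
by move/nseqP=> [-> _]; lia.
Qed.

Lemma F_mkT i l p a c d s e s' e' u v :
  p < i < p.+4 -> size s' = size s ->
  midT p a c d s e = u ++ i :: v -> midT p a c d s' e' = u ++ i.+1 :: v ->
  (forall K, rum i (midT p a c d s e) K 0 None = Some (K + size u)) ->
  F_op i (mkT l p a c d s e) = Some (mkT l p a c d s' e').
Proof.
move=> Hi Hs E1 E2 Er.
apply: (@F_opE _ _ _ (flatten (rev (Suf l p)) ++ u) (v ++ flatten (rev (Pre l p)))).
- by rewrite rw_mkT E1 -!catA.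
- by rewrite rw_mkT E2 -!catA.
- by rewrite /mkT !map_cat /= !size_cat Hs.
rewrite rw_mkT rum_skip; last first.
  apply: sub_all (Suf_big l p) => x /=; lia.
rewrite rum_tail; last first.
  apply: sub_all (Pre_small l p) => x /=; lia.
by rewrite Er size_cat.
Qed.

Lemma F_mkTN i l p a c d s e :
  p < i < p.+4 ->
  (forall K, rum i (midT p a c d s e) K 0 None = None) ->
  F_op i (mkT l p a c d s e) = None.
Proof.
move=> Hi Er; apply: F_opN.
rewrite rw_mkT rum_skip; last first.
  apply: sub_all (Suf_big l p) => x /=; lia.
rewrite rum_tail; last first.
  apply: sub_all (Pre_small l p) => x /=; lia.
by rewrite Er.
Qed.


Ltac rstep := first [ rewrite rum_nopen | rewrite rum_nclose | rewrite rum_open | rewrite rum_close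
  | (rewrite rum_nother; [|lia|lia]) | (rewrite rum_other; [|lia|lia]) ].

Ltac rsolve := move=> K; rewrite /midT -?catA ?cat_cons -?catA; repeat rstep; rewrite ?rum_nil;
  rewrite ?size_cat ?size_nseq /= ?size_cat ?size_nseq /=; repeat (case: ifP => ?); try (congr Some; lia); try lia.


Lemma step1 l p a c d : c <= a -> 
  F_op p.+1 (mkT l p a c d [:: p.+1; p.+2] p.+3) = Some (mkT l p a c d [:: p.+2; p.+2] p.+3).
Proof.
move=> Hca.
apply: (@F_mkT _ _ _ _ _ _ _ _ _ _ (nseq c p.+3 ++ (nseq c p.+2 ++ p.+3 :: nseq d p.+4) ++ nseq a p.+1) [:: p.+2]) => //.
- lia.
- by rewrite /midT -!catA.
- by rewrite /midT -!catA.
rsolve.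
Qed.

Lemma step2 l p a c d : c <= a ->
  F_op p.+2 (mkT l p a c d [:: p.+2; p.+2] p.+3) = Some (mkT l p a c d [:: p.+2; p.+3] p.+3).
Proof.
move=> Hca.
apply: (@F_mkT _ _ _ _ _ _ _ _ _ _ (nseq c p.+3 ++ (nseq c p.+2 ++ p.+3 :: nseq d p.+4) ++ nseq a p.+1 ++ [:: p.+2]) [::]) => //.
- lia.
- by rewrite /midT -!catA.
- by rewrite /midT -!catA.
rsolve.
Qed.

Lemma step3 l p a c d : c <= a -> 1 <= d ->
  F_op p.+3 (mkT l p a c d [:: p.+1; p.+2] p.+3) = Some (mkT l p a c d [:: p.+1; p.+2] p.+4).
Proof.
move=> Hca Hd.
apply: (@F_mkT _ _ _ _ _ _ _ _ _ _ (nseq c p.+3 ++ nseq c p.+2) (nseq d p.+4 ++ nseq a p.+1 ++ [:: p.+1; p.+2])) => //.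
- lia.
- by rewrite /midT -!catA.
- by rewrite /midT -!catA.
rsolve.
Qed.

Lemma step4 l p a c d : c <= a ->
  F_op p.+2 (mkT l p a c d [:: p.+1; p.+2] p.+4) = Some (mkT l p a c d [:: p.+1; p.+3] p.+4).
Proof.
move=> Hca.
apply: (@F_mkT _ _ _ _ _ _ _ _ _ _ (nseq c p.+3 ++ (nseq c p.+2 ++ p.+4 :: nseq d p.+4) ++ nseq a p.+1 ++ [:: p.+1]) [::]) => //.
- lia.
- by rewrite /midT -!catA.
- by rewrite /midT -!catA.
rsolve.
Qed.

Lemma step5 l p a c d : c <= a ->
  F_op p.+2 (mkT l p a c d [:: p.+1; p.+3] p.+2) = Some (mkT l p a c d [:: p.+1; p.+3] p.+3).
Proof.
move=> Hca.
apply: (@F_mkT _ _ _ _ _ _ _ _ _ _ (nseq c p.+3 ++ nseq c p.+2) (nseq d p.+4 ++ nseq a p.+1 ++ [:: p.+1; p.+3])) => //.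
- lia.
- by rewrite /midT -!catA.
- by rewrite /midT -!catA.
rsolve.
Qed.

Lemma step6 l p a c d : c <= a ->
  F_op p.+1 (mkT l p a c d [:: p.+1; p.+3] p.+3) = Some (mkT l p a c d [:: p.+2; p.+3] p.+3).
Proof.
move=> Hca.
apply: (@F_mkT _ _ _ _ _ _ _ _ _ _ (nseq c p.+3 ++ (nseq c p.+2 ++ p.+3 :: nseq d p.+4) ++ nseq a p.+1) [:: p.+3]) => //.
- lia.
- by rewrite /midT -!catA.
- by rewrite /midT -!catA.
rsolve.
Qed.

Lemma step7 l p a c d : c <= a -> 1 <= d ->
  F_op p.+3 (mkT l p a c d [:: p.+1; p.+3] p.+3) = Some (mkT l p a c d [:: p.+1; p.+3] p.+4).
Proof.
move=> Hca Hd.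
apply: (@F_mkT _ _ _ _ _ _ _ _ _ _ (nseq c p.+3 ++ nseq c p.+2) (nseq d p.+4 ++ nseq a p.+1 ++ [:: p.+1; p.+3])) => //.
- lia.
- by rewrite /midT -!catA.
- by rewrite /midT -!catA.
rsolve.
Qed.

Lemma step8 l p a c d : c <= a ->
  F_op p.+2 (mkT l p a c d [:: p.+1; p.+2] p.+3) = None.
Proof.
move=> Hca.
apply: F_mkTN; first lia.
rsolve; by [].
Qed.


Definition mkG l p (m0 m1 m2 : seq nat) : tableau := Pre l p ++ [:: m0; m1; m2] ++ Suf l p.

Definition rowf l p (m0 m1 m2 : seq nat) r :=
  if r < p then nseq (nth 0 l r) r.+1 else if r == p then m0 else if r == p.+1 then m1
  else if r == p.+2 then m2 else if r < size l then nseq (nth 0 l r) r.+2 else [::].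

Lemma size_mkG l p m0 m1 m2 : p.+2 < size l -> size (mkG l p m0 m1 m2) = size l.
Proof. by move=> H; rewrite /mkG !size_cat !size_map !size_iota /=; lia. Qed.

Lemma nth_mkG l p m0 m1 m2 r : p.+2 < size l ->
  nth [::] (mkG l p m0 m1 m2) r = rowf l p m0 m1 m2 r.
Proof.
move=> Hl; rewrite /mkG /rowf nth_cat size_map size_iota.
case: ltnP => H1.
  by rewrite (nth_map 0) ?size_iota // nth_iota.
rewrite nth_cat /=.
have [E|[E|[E|E]]] : r = p \/ r = p.+1 \/ r = p.+2 \/ p.+2 < r by lia.
- by subst r; rewrite subnn eqxx.
- subst r; have -> : p.+1 - p = 1 by lia.
  have -> : (p.+1 == p) = false by lia.
  by rewrite eqxx.
- subst r; have -> : p.+2 - p = 2 by lia.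
  have -> : (p.+2 == p) = false by lia.
  have -> : (p.+2 == p.+1) = false by lia.
  by rewrite eqxx.
have -> : (r - p < 3) = false by lia.
have -> : (r == p) = false by lia.
have -> : (r == p.+1) = false by lia.
have -> : (r == p.+2) = false by lia.
case: ltnP => H3.
  rewrite /Suf (nth_map 0) ?size_iota; last lia.
  rewrite nth_iota; last lia.
  by rewrite (_ : p.+3 + (r - p - 3) = r) //; lia.
by rewrite nth_default // size_map size_iota; lia.
Qed.

Lemma sorted_nseq m x : sorted leq (nseq m x).
Proof. case: m => //= m; elim: m => //= m IH; by rewrite leqnn. Qed.

Lemma part_mono l i j : is_partition l -> i <= j -> j < size l -> nth 0 l j <= nth 0 l i.
Proof.
case/andP=> Hs _ Hij Hj.
have Gt : transitive geq by move=> x y z H1 H2; apply: leq_trans H2 H1.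
have := sorted_leq_nth Gt (fun x => leqnn x) 0 Hs.
by move=> /(_ i j); apply; rewrite ?inE //; lia.
Qed.

Lemma mkG_ssyt n l p m0 m1 m2 :
  is_partition l -> size l <= n -> p.+2 < size l ->
  size m0 = nth 0 l p -> size m1 = nth 0 l p.+1 -> size m2 = nth 0 l p.+2 ->
  sorted leq m0 -> sorted leq m1 -> sorted leq m2 ->
  all (fun x => p < x <= p.+4) (m0 ++ m1 ++ m2) ->
  (forall j, j < size m1 -> nth 0 m0 j < nth 0 m1 j) ->
  (forall j, j < size m2 -> nth 0 m1 j < nth 0 m2 j) ->
  is_ssyt n l (mkG l p m0 m1 m2).
Proof.
move=> Hpart Hn Hp S0 S1 S2 So0 So1 So2 Hall C01 C12.
have Hall' : forall x, (x \in m0) || (x \in m1) || (x \in m2) -> p < x <= p.+4.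
  by move=> x Hx; apply: (allP Hall); rewrite !mem_cat orbA.
have Hrow : forall r, r < size l -> size (rowf l p m0 m1 m2 r) = nth 0 l r.
  move=> r Hr; rewrite /rowf; case: ifP => _; first by rewrite size_nseq.
  case: eqP => [->//|_]; case: eqP => [->//|_]; case: eqP => [->//|_].
  by rewrite Hr size_nseq.
apply/and4P; split.
- apply/eqP/(@eq_from_nth _ 0); first by rewrite size_map size_mkG.
  move=> r; rewrite size_map size_mkG // => Hr.
  by rewrite (nth_map [::]) ?size_mkG // nth_mkG // Hrow.
- apply/allP=> row /(nthP [::]) [r]; rewrite size_mkG // => Hr <-.
  rewrite nth_mkG // /rowf; case: ifP => _; first exact: sorted_nseq.
  case: eqP => _ //; case: eqP => _ //; case: eqP => _ //.
  by case: ifP => _ //; exact: sorted_nseq.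
- apply/allP=> row /(nthP [::]) [r]; rewrite size_mkG // => Hr <-.
  apply/allP=> x; rewrite nth_mkG // /rowf; case: ifP => H1.
    by case/nseqP=> -> _; lia.
  case: eqP => _.
    by move=> Hx; have := Hall' x; rewrite Hx /=; lia.
  case: eqP => _.
    by move=> Hx; have := Hall' x; rewrite Hx orbT /=; lia.
  case: eqP => _.
    by move=> Hx; have := Hall' x; rewrite Hx !orbT /=; lia.
  by rewrite Hr => /nseqP [-> _]; lia.
apply/forallP=> r; apply/forallP=> c.
have Hr : r < size l by rewrite -(size_mkG m0 m1 m2 Hp).
have Hc : nat_of_ord c < size (rowf l p m0 m1 m2 r.+1).
  rewrite -nth_mkG //; exact: ltn_ord.
move: (nat_of_ord c) Hc => c' Hc.
rewrite nth_mkG // nth_mkG //.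
move: (nat_of_ord r) Hr Hc => {c} r Hr Hc.
case: (ltnP r.+1 (size l)) => Hr1; last first.
  move: Hc; rewrite /rowf.
  have -> : (r.+1 < p) = false by lia.
  have -> : (r.+1 == p) = false by lia.
  have -> : (r.+1 == p.+1) = false by lia.
  have -> : (r.+1 == p.+2) = false by lia.
  have -> : (r.+1 < size l) = false by lia.
  by [].
have Hc2 : c' < nth 0 l r.
  apply: leq_trans (part_mono Hpart (leqnSn r) Hr1); by rewrite -Hrow.
have Hc1 : c' < size (rowf l p m0 m1 m2 r) by rewrite Hrow.
have memr : forall r', r' < size l -> c' < size (rowf l p m0 m1 m2 r') ->
   nth 0 (rowf l p m0 m1 m2 r') c' \in rowf l p m0 m1 m2 r' by move=> *; apply: mem_nth.
move: Hc Hc1; rewrite /rowf.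
case: (ltnP r.+1 p) => H1.
  have -> : r < p by lia.
  by rewrite !size_nseq !nth_nseq => -> ->.
case: (eqVneq r.+1 p) => H2.
  have -> : r < p by lia.
  move=> Hc _; rewrite nth_nseq Hc2.
  have : nth 0 m0 c' \in m0 by apply: mem_nth.
  by move=> Hm; have := Hall' _ (introT orP (or_introl (introT orP (or_introl Hm)))); lia.
try (have -> : (r < p) = false by lia).
case: (eqVneq r p) => H3.
  subst r; try (have -> : (p.+1 == p) = false by lia).
  rewrite ?eqxx.
  by move=> Hc _; apply: C01.
case: (eqVneq r p.+1) => H4.
  subst r; try (have -> : (p.+2 == p) = false by lia).
  try (have -> : (p.+2 == p.+1) = false by lia).
  try (have -> : (p.+1 == p) = false by lia).
  rewrite ?eqxx.
  by move=> Hc _; apply: C12.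
case: (eqVneq r p.+2) => H5.
  subst r; try (have -> : (p.+3 == p) = false by lia).
  try (have -> : (p.+3 == p.+1) = false by lia).
  try (have -> : (p.+3 == p.+2) = false by lia).
  try (have -> : (p.+3 < p) = false by lia).
  try (have -> : (p.+2 == p) = false by lia).
  try (have -> : (p.+2 == p.+1) = false by lia).
  rewrite ?eqxx ?Hr1.
  rewrite size_nseq nth_nseq => Hc Hc'; rewrite Hc.
  have : nth 0 m2 c' \in m2 by apply: mem_nth.
  by move=> Hm; have := Hall' _ (introT orP (or_intror Hm)); lia.
try (have -> : (r.+1 == p) = false by lia).
try (have -> : (r.+1 == p.+1) = false by lia).
try (have -> : (r.+1 == p.+2) = false by lia).
try (have -> : (r.+1 < p) = false by lia).
rewrite ?Hr1 ?Hr.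
by rewrite !size_nseq !nth_nseq => -> ->.
Qed.


Lemma sorted_blk a x y b z : x <= y -> y <= z -> sorted leq (nseq a x ++ y :: nseq b z).
Proof.
move=> Hxy Hyz.
have H2 : path leq y (nseq b z).
  elim: b => //= b IH; case: b IH => [|b] IH /=; rewrite Hyz //.
  by rewrite leqnn; move: IH => /= /andP[_ ->].
elim: a => [|a IH] //=.
case: a IH => [|a] IH /=; first by rewrite Hxy.
by rewrite leqnn.
Qed.

Lemma col01 p a c d y z e j : c <= a -> c + d.+1 <= a.+2 -> p < y -> y < e ->
  y < p.+4 -> z < p.+4 -> p.+2 <= e ->
  j < c + d.+1 ->
  nth 0 (nseq a p.+1 ++ [:: y; z]) j < nth 0 (nseq c p.+2 ++ e :: nseq d p.+4) j.
Proof.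
move=> H1 H2 H3 H4 H5 H6 H7 Hj.
rewrite !nth_cat !size_nseq.
case: (ltnP j a) => Hja.
  rewrite nth_nseq Hja.
  case: (ltnP j c) => Hjc; first by rewrite nth_nseq Hjc.
  case E: (j - c) => [|k] /=; first lia.
  rewrite nth_nseq; have -> : k < d by lia. lia.
have Hjc : (j < c) = false by lia.
rewrite Hjc.
case E: (j - c) => [|k] /=.
  have E2 : j - a = 0 by lia.
  by rewrite E2.
rewrite nth_nseq; have -> : k < d by lia.
case E2: (j - a) => [|[|k']] /=; lia.
Qed.

Lemma col12 p c d e j : j < c ->
  nth 0 (nseq c p.+2 ++ e :: nseq d p.+4) j < nth 0 (nseq c p.+3) j.
Proof. by move=> Hj; rewrite nth_cat size_nseq Hj !nth_nseq Hj. Qed.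

Lemma mkT_ssyt n l p y z e :
  is_partition l -> size l <= n -> p.+2 < size l ->
  nth 0 l p.+1 <= nth 0 l p -> (nth 0 l p.+2).+2 <= nth 0 l p.+1 ->
  p < y -> y <= z -> z < p.+4 -> y < e -> p.+2 <= e <= p.+4 ->
  is_ssyt n l (mkT l p (nth 0 l p - 2) (nth 0 l p.+2) (nth 0 l p.+1 - nth 0 l p.+2 - 1) [:: y; z] e).
Proof.
move=> Hpart Hn Hp HAB HBC Hy Hyz Hz Hye He.
apply: mkG_ssyt => //.
- rewrite size_cat size_nseq /=; lia.
- rewrite size_cat size_nseq /= size_nseq; lia.
- by rewrite size_nseq.
- apply: (@sorted_blk _ _ _ 1 _) => //; lia.
- apply: sorted_blk; lia.
- exact: sorted_nseq.
- apply/allP=> x; rewrite !mem_cat !inE.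
  case/orP=> [/orP[/nseqP[-> _]|/orP[/eqP->|/eqP->]]|/orP[/orP[/nseqP[-> _]|/orP[/eqP->|/nseqP[-> _]]]|/nseqP[-> _]]]; lia.
- move=> j; rewrite size_cat size_nseq /= size_nseq => Hj.
  apply: col01; lia.
- move=> j; rewrite size_nseq => Hj; exact: col12.
Qed.


Lemma row_p l p a c d s e : p.+2 < size l ->
  nth [::] (mkT l p a c d s e) p = nseq a p.+1 ++ s.
Proof.
move=> Hp; rewrite (nth_mkG _ _ _ _ Hp) /rowf ltnn eqxx //.
Qed.

Theorem lemma5p6 (lambda : seq nat) (n : nat) :
  is_partition lambda ->
  size lambda <= n ->
  (exists p, [/\ p.+2 < size lambda,
                 nth 0 lambda p.+1 <= nth 0 lambda p &
                 (nth 0 lambda p.+2).+2 <= nth 0 lambda p.+1]) ->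
  ~ B_poset_is_lattice n lambda.
Proof.
move=> Hpart Hn [p [Hp HAB HBC]].
set a := nth 0 lambda p - 2.
set c := nth 0 lambda p.+2.
set d := nth 0 lambda p.+1 - nth 0 lambda p.+2 - 1.
have Hca : c <= a by rewrite /a /c; lia.
have Hd : 1 <= d by rewrite /d; lia.
pose T s e := mkT lambda p a c d s e.
have Sx : is_ssyt n lambda (T [:: p.+1; p.+2] p.+3) by apply: mkT_ssyt => //; lia.
have Sy : is_ssyt n lambda (T [:: p.+1; p.+3] p.+2) by apply: mkT_ssyt => //; lia.
have Sz1 : is_ssyt n lambda (T [:: p.+1; p.+3] p.+4) by apply: mkT_ssyt => //; lia.
have Sz2 : is_ssyt n lambda (T [:: p.+2; p.+3] p.+3) by apply: mkT_ssyt => //; lia.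
apply: (@no_lattice n (fun X => is_ssyt n lambda X) _ _ _ _
   (T [:: p.+2; p.+2] p.+3) (T [:: p.+1; p.+2] p.+4) (T [:: p.+1; p.+3] p.+3) p.+1
   Sx Sy Sz1 Sz2).
- move=> E; have := congr1 (fun X => nth 0 (nth [::] X p) a.+1) E.
  rewrite /T !row_p // !nth_cat !size_nseq ltnNge leqnSn /= subSnn /=; lia.
- move=> E; have := congr1 (fun X => nth 0 (nth [::] X p) a) E.
  rewrite /T !row_p // !nth_cat !size_nseq ltnn subnn /=; lia.
- by [].
- lia.
- exact: step1.
- exact: step2.
- exact: step3.
- exact: step4.
- exact: step5.
- exact: step6.
- exact: step7.
- exact: step8.
Qed.
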